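(* Let $\textbf{F}$ be an IVF on a nonempty subset $\mathcal{X}$ of $\mathbb{R}^n$ that is $gH$-differentiable at $\bar{x}\in\mathcal{X}$, with linear IVF $\textbf{L}_{\bar{x}}$ as in the definition of $gH$-differentiability. Then the $gH$-gradient $\nabla\textbf{F}(\bar{x})$ exists and, for each $d=(d_1,\dots,d_n)^T\in\mathbb{R}^n$, \[\textbf{L}_{\bar{x}}(d)=d^T\odot\nabla\textbf{F}(\bar{x}),\quad\text{where } d^T\odot\nabla\textbf{F}(\bar{x})=\bigoplus_{i=1}^n d_i\odot D_i\textbf{F}(\bar{x}).\]
   Context: $I(\mathbb{R})$: closed bounded intervals $\textbf{A}=[\underline{a},\overline{a}]$ with Moore arithmetic ($\oplus$ endpointwise; $\lambda\odot\textbf{A}=[\lambda\underline{a},\lambda\overline{a}]$ if $\lambda\ge0$, $[\lambda\overline{a},\lambda\underline{a}]$ if $\lambda<0$); $gH$-difference $\textbf{A}\ominus_{gH}\textbf{B}=[\min\{\underline{a}-\underline{b},\overline{a}-\overline{b}\},\max\{\underline{a}-\underline{b},\overline{a}-\overline{b}\}]$; limits of intervals are in the norm $\max\{|\underline{a}|,|\overline{a}|\}$. An IVF is $\textbf{F}(x)=[\underline{f}(x),\overline{f}(x)]$. The $i$-th partial $gH$-derivative $D_i\textbf{F}(\bar{x})$ is the $gH$-derivative $\lim_{h\to0}\frac1h\odot(\textbf{G}_i(\bar{x}_i+h)\ominus_{gH}\textbf{G}_i(\bar{x}_i))$ of $\textbf{G}_i(x_i)=\textbf{F}(\bar{x}_1,\dots,x_i,\dots,\bar{x}_n)$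 at $\bar{x}_i$, when it exists; $\nabla\textbf{F}(\bar{x})=(D_1\textbf{F}(\bar{x}),\dots,D_n\textbf{F}(\bar{x}))^T$ exists when all these exist. An IVF $\textbf{L}:\mathbb{R}^n\to I(\mathbb{R})$ is linear if $\textbf{L}(x)=\bigoplus_{i=1}^n x_i\odot\textbf{L}(e_i)$ for all $x$, $e_i$ the standard basis. $\textbf{F}$ is $gH$-differentiable at $\bar{x}$ if there exist a linear IVF $\textbf{L}_{\bar{x}}:\mathbb{R}^n\to I(\mathbb{R})$, an IVF $\textbf{E}(\textbf{F}(\bar{x});d)$ and $\delta>0$ such that $(\textbf{F}(\bar{x}+d)\ominus_{gH}\textbf{F}(\bar{x}))\ominus_{gH}\textbf{L}_{\bar{x}}(d)=\lVert d\rVert\odot\textbf{E}(\textbf{F}(\bar{x});d)$ for all $d$ with $\lVert d\rVert<\delta$, where $\textbf{E}(\textbf{F}(\bar{x});d)\to\textbf{0}$ as $\lVert d\rVert\to0$. *)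

(* Defs.v *)
From HB Require Import structures.
From mathcomp Require Import all_boot all_order all_algebra.
From mathcomp Require Import reals.
Set Implicit Arguments. Unset Strict Implicit. Unset Printing Implicit Defensive.
Import Order.TTheory GRing.Theory Num.Theory.
Local Open Scope ring_scope.

Section IntervalArith.
Variable R : realType.

Record cint := Cint { ilo : R; ihi : R; ilo_le_ihi : ilo <= ihi }.

Lemma cint_add_le (A B : cint) : ilo A + ilo B <= ihi A + ihi B.
Proof. by apply: lerD; apply: ilo_le_ihi. Qed.

Definition iadd (A B : cint) : cint :=
  Cint (cint_add_le A B).

Lemma cint_scale_pos (l : R) (A : cint) : 0 <= l -> l * ilo A <= l * ihi A.
Proof. by move=> h; apply: ler_wpM2l => //; apply: ilo_le_ihi. Qed.

Lemma cint_scale_neg (l : R) (A : cint) : ~~ (0 <= l) -> l * ihi A <= l * ilo A.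
Proof.
move=> h; have hl : l <= 0 by rewrite ltW // ltNge.
by rewrite ler_wnM2l //; apply: ilo_le_ihi.
Qed.

Definition iscale (l : R) (A : cint) : cint :=
  match boolP (0 <= l) with
  | AltTrue h => Cint (cint_scale_pos A h)
  | AltFalse h => Cint (cint_scale_neg A h)
  end.

Lemma cint_minmax (a b : R) : Num.min a b <= Num.max a b.
Proof. by rewrite ge_min !le_max lexx. Qed.

Definition igH (A B : cint) : cint :=
  Cint (cint_minmax (ilo A - ilo B) (ihi A - ihi B)).

Definition izero : cint := Cint (lexx (0 : R)).

Definition inorm (A : cint) : R := Num.max `|ilo A| `|ihi A|.

Definition isum (n : nat) (A : 'I_n -> cint) : cint :=
  \big[iadd/izero]_(i < n) A i.

Definition vnorm (n : nat) (d : 'rV[R]_n) : R :=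
  Num.sqrt (\sum_(i < n) d 0 i ^+ 2).

Definition ebasis (n : nat) (i : 'I_n) : 'rV[R]_n := delta_mx 0 i.

(* gH-derivative of G : R -> I(R) at t equals D:
   lim_{h -> 0} (1/h) (.) (G (t+h) -gH G t) = D, the limit taken in the
   norm of I(R), i.e. || (1/h)(.)(G(t+h) -gH G t) -gH D || -> 0. *)
Definition is_gH_derivative (G : R -> cint) (t : R) (D : cint) : Prop :=
  forall eps : R, 0 < eps -> exists delta : R, 0 < delta /\
    forall h : R, h != 0 -> `|h| < delta ->
      inorm (igH (iscale h^-1 (igH (G (t + h)) (G t))) D) < eps.

(* i-th partial gH-derivative of F at xbar equals D:
   G_i(x_i) = F(xbar_1, ..., x_i, ..., xbar_n). *)
Definition is_partial_gH (n : nat) (F : 'rV[R]_n -> cint) (xbar : 'rV[R]_n)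
    (i : 'I_n) (D : cint) : Prop :=
  is_gH_derivative (fun t => F (\row_(j < n) if j == i then t else xbar 0 j))
    (xbar 0 i) D.

Definition linear_ivf (n : nat) (L : 'rV[R]_n -> cint) : Prop :=
  forall x : 'rV[R]_n, L x = isum (fun i => iscale (x 0 i) (L (ebasis i))).

Definition gH_differentiable_with (n : nat) (F : 'rV[R]_n -> cint)
    (xbar : 'rV[R]_n) (L : 'rV[R]_n -> cint) : Prop :=
  linear_ivf L /\
  exists (E : 'rV[R]_n -> cint) (delta : R), 0 < delta /\
    (forall d : 'rV[R]_n, vnorm d < delta ->
       igH (igH (F (xbar + d)) (F xbar)) (L d) = iscale (vnorm d) (E d)) /\
    (forall eps : R, 0 < eps -> exists gam : R, 0 < gam /\
       forall d : 'rV[R]_n, 0 < vnorm d -> vnorm d < gam ->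
         inorm (igH (E d) izero) < eps).

End IntervalArith.

(* Main.v *)
Require Import Defs.
From HB Require Import structures.
From mathcomp Require Import all_boot all_order all_algebra.
From mathcomp Require Import reals.
Import Order.TTheory GRing.Theory Num.Theory.
Local Open Scope ring_scope.

Section H.
Variable R : realType.
Implicit Types A B C : cint R.

Lemma cint_eq A B : ilo A = ilo B -> ihi A = ihi B -> A = B.
Proof.
case: A => a1 a2 pa; case: B => b1 b2 pb /= e1 e2; subst.
by rewrite (bool_irrelevance pa pb).
Qed.

Lemma iscale_lo l A : ilo (iscale l A) = if 0 <= l then l * ilo A else l * ihi A.
Proof. rewrite /iscale; destruct boolP as [h|h]; by []. Qed.
Lemma iscale_hi l A : ihi (iscale l A) = if 0 <= l then l * ihi A else l * ilo A.
Proof. rewrite /iscale; destruct boolP as [h|h]; by []. Qed.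

Lemma inorm_igH A B : inorm (igH A B) = Num.max `|ilo A - ilo B| `|ihi A - ihi B|.
Proof.
rewrite /inorm /=; set a := ilo A - ilo B; set b := ihi A - ihi B.
by case: (leP a b) => h //; rewrite maxC.
Qed.

Lemma max_absM (k a b : R) : Num.max `|k * a| `|k * b| = `|k| * Num.max `|a| `|b|.
Proof.
rewrite !normrM; case: (leP `|a| `|b|) => h.
  by apply/max_idPr; rewrite ler_wpM2l.
by apply/max_idPl; rewrite ler_wpM2l // ltW.
Qed.

Lemma inorm_igH_scale k A B :
  inorm (igH (iscale k A) (iscale k B)) = `|k| * inorm (igH A B).
Proof.
rewrite !inorm_igH !iscale_lo !iscale_hi; case: ifP => _; rewrite -!mulrBr max_absM //.
by rewrite maxC.
Qed.

Lemma inorm_scale k A : inorm (iscale k A) = `|k| * inorm A.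
Proof.
rewrite /inorm iscale_lo iscale_hi; case: ifP => _; rewrite max_absM //.
by rewrite maxC.
Qed.

Lemma inorm_igH0 A : inorm (igH A (izero R)) = inorm A.
Proof. by rewrite inorm_igH /inorm /= !subr0. Qed.

Lemma iscaleK k A : k != 0 -> iscale k^-1 (iscale k A) = A.
Proof.
move=> k0; apply: cint_eq; rewrite ?iscale_lo ?iscale_hi ?iscale_lo invr_ge0;
by have [h|h] := leP 0 k; rewrite mulKf.
Qed.

Lemma isum_lo n (f : 'I_n -> cint R) : ilo (isum f) = \sum_(i < n) ilo (f i).
Proof.
rewrite /isum; elim/big_rec2: _ => //= i y A _ ->; done.
Qed.
Lemma isum_hi n (f : 'I_n -> cint R) : ihi (isum f) = \sum_(i < n) ihi (f i).
Proof.
rewrite /isum; elim/big_rec2: _ => //= i y A _ ->; done.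
Qed.

Lemma vnorm_e n (i : 'I_n) (h : R) : vnorm (h *: ebasis R i) = `|h|.
Proof.
rewrite /vnorm (bigD1 i) //= big1 ?addr0.
  by rewrite !mxE !eqxx /= mulr1 sqrtr_sqr.
by move=> j ji; rewrite !mxE !eqxx /= (negbTE ji) /= ?mulr0n mulr0 expr0n.
Qed.


Lemma row_e n (xbar : 'rV[R]_n) (i : 'I_n) (h : R) :
  (\row_(j < n) if j == i then xbar 0 i + h else xbar 0 j) = xbar + h *: ebasis R i.
Proof.
apply/rowP => j; rewrite !mxE !eqxx /=.
by case: eqP => [->|/eqP ji]; rewrite /= ?mulr1 ?mulr0 ?addr0.
Qed.

Lemma L_e n (L : 'rV[R]_n -> cint R) (i : 'I_n) (h : R) :
  linear_ivf L -> L (h *: ebasis R i) = iscale h (L (ebasis R i)).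
Proof.
move=> lin; rewrite lin; apply: cint_eq; rewrite ?isum_lo ?isum_hi (bigD1 i) //= big1 ?addr0.
- by rewrite !mxE !eqxx /= mulr1.
- by move=> j ji; rewrite iscale_lo !mxE !eqxx /= (negbTE ji) /= mulr0 lexx mul0r.
- by rewrite !mxE !eqxx /= mulr1.
- by move=> j ji; rewrite iscale_hi !mxE !eqxx /= (negbTE ji) /= mulr0 lexx mul0r.
Qed.

End H.

Theorem theorem3p1 (R : realType) (n : nat) (X : 'rV[R]_n -> Prop)
  (F : 'rV[R]_n -> cint R) (xbar : 'rV[R]_n) (L : 'rV[R]_n -> cint R) :
  (exists x, X x) -> X xbar ->
  gH_differentiable_with F xbar L ->
  exists gradF : 'I_n -> cint R,
    (forall i : 'I_n, is_partial_gH F xbar i (gradF i)) /\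
    (forall d : 'rV[R]_n,
       L d = isum (fun i : 'I_n => iscale (d 0 i) (gradF i))).
Proof.
move=> _ _ [lin [E [delta [dpos [HE HEl]]]]].
exists (fun i => L (ebasis R i)); split; last exact: lin.
move=> i eps epos; have [gam [gpos Hg]] := HEl eps epos.
exists (Num.min delta gam); split; first by rewrite lt_min dpos gpos.
move=> h h0; rewrite lt_min => /andP[hd hg].
rewrite row_e.
have Hrow : (\row_(j < n) if j == i then xbar 0 i else xbar 0 j) = xbar.
  by apply/rowP => j; rewrite mxE; case: eqP => [->|].
rewrite Hrow.
have ne : vnorm (h *: ebasis R i) = `|h| by rewrite vnorm_e.
have := HE (h *: ebasis R i); rewrite ne => /(_ hd).
rewrite L_e // => eq1.
have := congr1 (@inorm R) eq1; rewrite inorm_scale normr_id => eq2.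
rewrite -[X in igH _ X](@iscaleK R _ (L (ebasis R i)) h0) inorm_igH_scale eq2.
rewrite mulrA -normrM mulVf // normr1 mul1r -inorm_igH0.
by apply: Hg; rewrite ne // normr_gt0.
Qed.
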